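(* Let $q > 2$ be an integer. A generalized quadrangle of order $(q, q^2-q)$ whose automorphism group acts transitively on its points does not possess an ovoid.
   Context: A generalized quadrangle of order $(s,t)$ consists of a set $P$ of points, a set $L$ of lines and an incidence relation such that every point lies on exactly $t+1$ lines, every line contains exactly $s+1$ points, and for every point $p$ and line $l$ not containing $p$ there is a unique point $p'$ on $l$ and a unique line $l'$ containing both $p$ and $p'$. Its point graph has vertex set $P$, two distinct points adjacent iff collinear. An ovoid is a Delsarte coclique of the point graph: a set of pairwise non-collinear points of size $\frac{ve^-}{e^- - k}$, where $v,k,e^-$ are the number of vertices, the valency, and the smallest eigenvalue of the point graph (for order $(q,q^2-q)$ this size is $q^3-q^2+1$); equivalently, a set of points meeting every line in exactly one point. *)

(* Defs.v *)
From mathcomp Require Import all_boot all_fingroup.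
Set Implicit Arguments. Unset Strict Implicit. Unset Printing Implicit Defensive.

Definition is_GQ (P L : finType) (inc : P -> L -> bool) (s t : nat) : Prop :=
  [/\ forall p : P, #|[set l : L | inc p l]| = t.+1,
      forall l : L, #|[set p : P | inc p l]| = s.+1 &
      forall (p : P) (l : L), ~~ inc p l ->
        exists p' : P, exists l' : L,
          [/\ inc p' l, inc p l', inc p' l' &
              forall (p'' : P) (l'' : L), inc p'' l -> inc p l'' -> inc p'' l'' ->
                p'' = p' /\ l'' = l']].

Definition collinear (P L : finType) (inc : P -> L -> bool) (x y : P) : bool :=
  (x != y) && [exists l : L, inc x l && inc y l].

Definition is_automorphism (P L : finType) (inc : P -> L -> bool)
    (f : {perm P}) (g : {perm L}) : Prop :=
  forall (p : P) (l : L), inc (f p) (g l) = inc p l.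

Definition point_transitive (P L : finType) (inc : P -> L -> bool) : Prop :=
  forall x y : P, exists f : {perm P}, exists g : {perm L},
    is_automorphism inc f g /\ f x = y.

(* Ovoid of a GQ of order (s,t): a Delsarte coclique of the point graph.
   For GQ(s,t) the point graph has v = (s+1)(st+1), k = s(t+1), e^- = -(t+1),
   so the Delsarte size v e^-/(e^- - k) equals s*t+1
   (= q^3-q^2+1 for order (q,q^2-q)). *)
Definition is_ovoid (P L : finType) (inc : P -> L -> bool) (s t : nat)
    (O : {set P}) : Prop :=
  (forall x y : P, x \in O -> y \in O -> ~~ collinear inc x y) /\
  #|O| = s * t + 1.

(* Main.v *)
Require Import Defs.
From mathcomp Require Import all_boot all_fingroup.
From mathcomp Require Import zify.
Set Implicit Arguments. Unset Strict Implicit. Unset Printing Implicit Defensive.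

Lemma card_sumb (T : finType) (A : {set T}) (p : pred T) :
  #|[set x in A | p x]| = \sum_(x in A) (p x : nat).
Proof.
rewrite -sum1_card [LHS]big_mkcond [RHS]big_mkcond /=; apply: eq_bigr => x _.
by rewrite in_set; case: (x \in A); case: (p x).
Qed.

Lemma dcount (T1 T2 : finType) (A : {set T1}) (B : {set T2}) (R : T1 -> T2 -> bool) :
  \sum_(a in A) #|[set b in B | R a b]| = \sum_(b in B) #|[set a in A | R a b]|.
Proof.
under eq_bigr => a _ do rewrite card_sumb.
under [RHS]eq_bigr => b _ do rewrite card_sumb.
by rewrite exchange_big.
Qed.

Lemma dcount_const (T1 T2 : finType) (A : {set T1}) (B : {set T2}) (R : T1 -> T2 -> bool) c1 c2 :
  (forall a, a \in A -> #|[set b in B | R a b]| = c1) ->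
  (forall b, b \in B -> #|[set a in A | R a b]| = c2) ->
  #|A| * c1 = #|B| * c2.
Proof.
move=> H1 H2; rewrite -!sum_nat_const.
rewrite -(eq_bigr _ H1) -(eq_bigr _ H2); exact: dcount.
Qed.

Lemma sum_le_eq (T : finType) (A : {set T}) (f g : T -> nat) :
  (forall i, i \in A -> f i <= g i) ->
  \sum_(i in A) f i = \sum_(i in A) g i -> forall i, i \in A -> f i = g i.
Proof.
move=> Hle Heq i Hi.
have H0 : \sum_(i in A) (g i - f i) = 0 by rewrite sumnB // Heq subnn.
move/eqP: H0; rewrite sum_nat_eq0 => /forallP /(_ i); rewrite Hi /= subn_eq0 => Hgf.
by apply/eqP; rewrite eqn_leq Hle.
Qed.

Lemma card1_of (T : finType) (A : {set T}) a :
  a \in A -> (forall b, b \in A -> b = a) -> #|A| = 1.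
Proof.
move=> Ha Hb; have -> : A = [set a].
  by apply/setP => b; rewrite in_set1; apply/idP/eqP => [/Hb|->].
exact: cards1.
Qed.

Lemma card_le1_of (T : finType) (A : {set T}) :
  (forall a b, a \in A -> b \in A -> a = b) -> #|A| <= 1.
Proof.
move=> H; case: (set_0Vmem A) => [->|[a Ha]]; first by rewrite cards0.
have -> : A = [set a].
  by apply/setP => b; rewrite in_set1; apply/idP/eqP => [Hb|->//]; apply: H.
by rewrite cards1.
Qed.

Lemma card_split (T : finType) (A : {set T}) (p : pred T) :
  #|[set x in A | p x]| + #|[set x in A | ~~ p x]| = #|A|.
Proof.
rewrite !card_sumb -big_split /= -sum1_card; apply: eq_bigr => x _.
by case: (p x).
Qed.

Section GQ.
Variables (P L : finType) (inc : P -> L -> bool) (s t : nat).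
Hypothesis Hpt : forall p : P, #|[set l : L | inc p l]| = t.+1.
Hypothesis Hln : forall l : L, #|[set p : P | inc p l]| = s.+1.
Hypothesis Hax : forall (p : P) (l : L), ~~ inc p l ->
        exists p' : P, exists l' : L,
          [/\ inc p' l, inc p l', inc p' l' &
              forall (p'' : P) (l'' : L), inc p'' l -> inc p l'' -> inc p'' l'' ->
                p'' = p' /\ l'' = l'].
Hypothesis Hoff : forall l : L, exists p : P, ~~ inc p l.

Definition col (x y : P) : bool := [exists l : L, inc x l && inc y l].

Lemma colC x y : col x y = col y x.
Proof. by apply/existsP/existsP => [] [l /andP[a b]]; exists l; rewrite a b. Qed.

Lemma colxx x : col x x.
Proof.
have : 0 < #|[set l : L | inc x l]| by rewrite Hpt.
by case/card_gt0P => l; rewrite inE => H; apply/existsP; exists l; rewrite H.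
Qed.

Lemma colI x y l : inc x l -> inc y l -> col x y.
Proof. by move=> a b; apply/existsP; exists l; rewrite a b. Qed.

Lemma U p m a la b lb : ~~ inc p m -> inc a m -> inc p la -> inc a la ->
  inc b m -> inc p lb -> inc b lb -> a = b /\ la = lb.
Proof.
move=> Hpm H1 H2 H3 H4 H5 H6.
have [p' [l' [_ _ _ Hu]]] := Hax Hpm.
by have [-> ->] := Hu a la H1 H2 H3; have [-> ->] := Hu b lb H4 H5 H6.
Qed.

Lemma L0 l1 l2 a b : l1 != l2 -> inc a l1 -> inc a l2 -> inc b l1 -> inc b l2 -> a = b.
Proof.
move=> Hne a1 a2 b1 b2.
case: (pickP [pred c | inc c l1 && ~~ inc c l2]) => [c /andP[c1 c2] | H1].
  by case: (U c2 a2 c1 a1 b2 c1 b1).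
case: (pickP [pred c | inc c l2 && ~~ inc c l1]) => [c /andP[c1 c2] | H2].
  by case: (U c2 a1 c1 a2 b1 c1 b2).
have sub12 : forall c, inc c l1 -> inc c l2.
  by move=> c Hc; move: (H1 c) => /=; rewrite Hc /=; case: (inc c l2).
case: (eqVneq a b) => // Hab.
have [c Hc] := Hoff l1.
have [p' [l' [Hp'1 Hcl' Hp'l' _]]] := Hax Hc.
have [w [w1 w2 wp]] : exists w, [/\ inc w l1, inc w l2 & w != p'].
  case: (eqVneq a p') => [Ea|Ha]; last by exists a.
  by exists b; rewrite b1 b2; subst; rewrite eq_sym.
case Hwl: (inc w l').
  by case: (U Hc Hp'1 Hcl' Hp'l' w1 Hcl' Hwl) => E; rewrite E eqxx in wp.
have Hwl' : ~~ inc w l' by rewrite Hwl.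
case: (U Hwl' Hp'l' w1 Hp'1 Hp'l' w2 (sub12 _ Hp'1)) => _ E.
by rewrite E eqxx in Hne.
Qed.

Lemma line_uniq x y l1 l2 : x != y -> inc x l1 -> inc y l1 -> inc x l2 -> inc y l2 -> l1 = l2.
Proof.
move=> Hxy a b c d; apply/eqP; apply/negPn/negP => Hne.
by move: (L0 Hne a c b d) => E; rewrite E eqxx in Hxy.
Qed.

Lemma proj p m : ~~ inc p m -> #|[set a | inc a m && col p a]| = 1.
Proof.
move=> Hpm; have [p' [l' [H1 H2 H3 Hu]]] := Hax Hpm.
apply: (@card1_of _ _ p'); first by rewrite inE H1 (colI H2 H3).
move=> b; rewrite inE => /andP[Hb /existsP[lb /andP[Hp Hbl]]].
by case: (Hu b lb Hb Hp Hbl).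
Qed.

Lemma tri a b c l : inc a l -> inc b l -> a != b -> col c a -> col c b -> inc c l.
Proof.
move=> Ha Hb Hab /existsP[la /andP[c1 a1]] /existsP[lb /andP[c2 b2]].
apply/negPn/negP => Hc.
by case: (U Hc Ha c1 a1 Hb c2 b2) => E; rewrite E eqxx in Hab.
Qed.

Definition N x := [set y | (y != x) && col x y].
Definition Z x y := [set z | col x z && col y z].
Definition Delta x := [set y | ~~ col x y].

Lemma cardN x : #|N x| = s * t.+1.
Proof.
have := @dcount_const _ _ (N x) [set l | inc x l] (fun y l => inc y l) 1 s.
rewrite Hpt muln1 mulnC; apply.
- move=> y; rewrite inE => /andP[Hyx /existsP[l /andP[Hx Hy]]].
  apply: (@card1_of _ _ l); first by rewrite !inE Hx Hy.
  move=> l2; rewrite !inE => /andP[Hx2 Hy2].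
  by apply: (line_uniq (x:=y) (y:=x)).
- move=> l; rewrite inE => Hxl.
  have -> : [set b in N x | inc b l] = [set p | inc p l] :\ x.
    apply/setP => y; rewrite !inE; apply/idP/idP.
      by case/andP => /andP[-> _] ->.
    by case/andP => -> Hy; rewrite (colI Hxl Hy) Hy.
  by move: (cardsD1 x [set p | inc p l]); rewrite Hln inE Hxl add1n => -[].
Qed.

Lemma cardZ x y : ~~ col x y -> #|Z x y| = t.+1.
Proof.
move=> Hxy.
have := @dcount_const _ _ (Z x y) [set l | inc x l] (fun z l => inc z l) 1 1.
rewrite Hpt !muln1; apply.
- move=> z; rewrite inE => /andP[/existsP[l /andP[Hx Hz]] Hyz].
  have Hzx : z != x by apply: contraNneq Hxy => E; rewrite colC -E.
  apply: (@card1_of _ _ l); first by rewrite !inE Hx Hz.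
  move=> l2; rewrite !inE => /andP[Hx2 Hz2].
  by apply: (line_uniq (x:=z) (y:=x)).
- move=> l; rewrite inE => Hxl.
  have Hyl : ~~ inc y l by apply: contra Hxy => Hy; apply: colI Hxl Hy.
  rewrite -(proj Hyl); apply: eq_card => z; rewrite !inE.
  apply/idP/idP; first by case/andP => /andP[_ ->] ->.
  by case/andP => Hz ->; rewrite (colI Hxl Hz) Hz.
Qed.

Lemma cardDz x z : z \in N x -> #|[set y in Delta x | col z y]| = s * t.
Proof.
rewrite inE => /andP[Hzx /existsP[l0 /andP[Hx0 Hz0]]].
have := @dcount_const _ _ [set y in Delta x | col z y] ([set l | inc z l] :\ l0)
   (fun y l => inc y l) 1 s.
have -> : #|[set l | inc z l] :\ l0| = t.
  by move: (cardsD1 l0 [set l | inc z l]); rewrite Hpt inE Hz0 add1n => -[].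
rewrite muln1 mulnC; apply.
- move=> y; rewrite !inE => /andP[Hxy /existsP[l /andP[Hz Hy]]].
  have Hyz : y != z by apply: contraNneq Hxy => ->; exact: colI Hx0 Hz0.
  have Hll0 : l != l0 by apply: contraNneq Hxy => E; rewrite E in Hy; exact: colI Hx0 Hy.
  apply: (@card1_of _ _ l); first by rewrite !inE Hll0 Hz Hy.
  move=> l2; rewrite !inE => /andP[/andP[_ Hz2] Hy2].
  by apply: (line_uniq (x:=y) (y:=z)).
- move=> l; rewrite !inE => /andP[Hll0 Hzl].
  have Hxl : ~~ inc x l.
    by apply: contra Hll0 => Hxl; apply/eqP; apply: (line_uniq (x:=x) (y:=z)) => //; rewrite eq_sym.
  have Hpr := proj Hxl.
  have -> : [set b in [set y in Delta x | col z y] | inc b l] = [set p | inc p l] :\ z.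
    apply/setP => y; rewrite !inE; apply/idP/idP.
      case/andP => /andP[Hxy _] ->; rewrite andbT.
      by apply: contraNneq Hxy => ->; exact: colI Hx0 Hz0.
    case/andP => Hyz Hy; rewrite Hy (colI Hzl Hy) !andbT.
    apply/negP => Hxy.
    have Hxz : col x z by rewrite colC (colI Hz0 Hx0).
    move: Hpr => /eqP /cards1P [a Ea].
    have : y \in [set a | inc a l && col x a] by rewrite inE Hy Hxy.
    have : z \in [set a | inc a l && col x a] by rewrite inE Hzl Hxz.
    by rewrite Ea !inE => /eqP Ez /eqP Ey; rewrite Ez Ey eqxx in Hyz.
  by move: (cardsD1 z [set p | inc p l]); rewrite Hln inE Hzl add1n => -[].
Qed.

Lemma cardDelta x : 0 < t -> #|Delta x| = s * s * t.
Proof.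
move=> Ht.
have := @dcount_const _ _ (Delta x) (N x) (fun y z => col y z) t.+1 (s * t).
rewrite cardN => H.
have : #|Delta x| * t.+1 = (s * s * t) * t.+1.
  have -> : s * s * t * t.+1 = s * t.+1 * (s * t) by lia.
  apply: H.
  - move=> y; rewrite inE => Hxy; rewrite -(cardZ Hxy); apply: eq_card => z; rewrite !inE; apply/idP/idP.
      by case/andP => /andP[_ ->] ->.
    case/andP => Hxz Hyz; rewrite Hxz Hyz !andbT.
    by apply: contraNneq Hxy => E; rewrite E in Hyz; rewrite colC.
  - move=> z Hz; rewrite -(cardDz Hz); by apply: eq_card => y; rewrite !inE [col y z]colC.
by move/eqP; rewrite eqn_pmul2r // => /eqP.
Qed.

Lemma cardP (x : P) : 0 < t -> #|[set: P]| = s.+1 * (s * t).+1.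
Proof.
move=> Ht; rewrite cardsT -(cardsC [set y | col x y]).
have -> : ~: [set y | col x y] = Delta x by apply/setP => y; rewrite !inE.
rewrite cardDelta // (cardsD1 x) inE colxx.
have -> : [set y | col x y] :\ x = N x by apply/setP => y; rewrite !inE.
rewrite cardN; lia.
Qed.


Definition cocl (O : {set P}) := forall a b, a \in O -> b \in O -> a != b -> ~~ col a b.

Lemma cocl_eq O a b : cocl O -> a \in O -> b \in O -> col a b -> a = b.
Proof.
move=> Hc Ha Hb Hab; apply/eqP; apply/negPn/negP => Hne.
by move: (Hc a b Ha Hb Hne); rewrite Hab.
Qed.

Lemma cle O y : cocl O -> y \notin O -> #|[set o in O | col y o]| <= t.+1.
Proof.
move=> Hc Hy.
set S := [set o in O | col y o].
have H := dcount S [set l | inc y l] (fun o l => inc o l).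
have E1 : \sum_(o in S) #|[set l in [set l | inc y l] | inc o l]| = #|S| * 1.
  rewrite -sum_nat_const; apply: eq_bigr => o; rewrite inE => /andP[Ho /existsP[l /andP[Hyl Hol]]].
  have Hoy : o != y by apply: contraNneq Hy => <-.
  apply: (@card1_of _ _ l); first by rewrite !inE Hyl Hol.
  move=> l2; rewrite !inE => /andP[Hy2 Ho2].
  by apply: (line_uniq (x:=o) (y:=y)).
rewrite E1 muln1 in H; rewrite H -(Hpt y) -[X in _ <= X]muln1 -sum_nat_const.
apply: leq_sum => l; rewrite inE => Hyl.
apply: card_le1_of => a b; rewrite !inE => /andP[/andP[Ha _] Hal] /andP[/andP[Hb _] Hbl].
exact: (cocl_eq Hc Ha Hb (colI Hal Hbl)).
Qed.

Lemma cA O y : cocl O -> #|O| = (s * t).+1 -> 0 < t -> y \notin O ->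
  #|[set o in O | col y o]| = t.+1.
Proof.
move=> Hc HO Ht Hy.
apply: (@sum_le_eq _ (~: O) (fun y => #|[set o in O | col y o]|) (fun _ => t.+1)); last by rewrite inE.
  by move=> z; rewrite inE => Hz; exact: cle.
rewrite sum_nat_const.
have HC : #|~: O| = s * (s * t).+1.
  have := cardsC O; rewrite -cardsT (cardP y Ht) HO; lia.
rewrite HC -(dcount O (~: O) (fun o y => col y o)).
have -> : \sum_(o in O) #|[set b in ~: O | col b o]| = \sum_(o in O) (s * t.+1).
  apply: eq_bigr => o Ho; rewrite -(cardN o); apply: eq_card => b; rewrite !inE colC.
  case Hob: (col o b); rewrite ?andbF ?andbT //.
  apply/idP/idP => [Hb|Hb]; first by apply: contraNneq Hb => ->.
  by apply/negP => HbO; move: Hb; rewrite (cocl_eq Hc Ho HbO Hob) eqxx.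
rewrite sum_nat_const HO; lia.
Qed.

Variable p : nat.
Hypothesis Hs : s = p.+1.
Hypothesis Ht : t = p.+1 * p.
Hypothesis Hp : 0 < p.

Lemma tpos : 0 < t.
Proof. by rewrite Ht muln_gt0 Hp. Qed.

Lemma mB O x y : cocl O -> #|O| = (s * t).+1 -> x \notin O -> y \notin O -> ~~ col x y ->
  #|[set o in O | col x o && col y o]| = s.
Proof.
move=> Hc HO Hx Hy Hxy.
set Ox := [set o in O | col x o].
have HOx : #|Ox| = t.+1 by apply: cA => //; exact: tpos.
set D := [set y in Delta x | y \notin O].
pose m y := #|[set o in Ox | col y o]|.
have -> : #|[set o in O | col x o && col y o]| = m y.
  by apply: eq_card => o; rewrite !inE andbA.
have OxN : forall o, o \in Ox -> o \in N x.
  move=> o; rewrite !inE => /andP[Ho ->]; rewrite andbT.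
  by apply: contraNneq Hx => <-.
have cnt1 : forall o, o \in Ox -> #|[set b in D | col b o && col b o]| = s * t.
  move=> o Ho; rewrite -(cardDz (OxN o Ho)); apply: eq_card => b; rewrite !inE andbb [col b o]colC.
  case Hob: (col o b); rewrite ?andbF ?andbT //.
  case Hxb: (col x b) => //=; apply/negP => HbO.
  move: Ho; rewrite inE => /andP[Ho Hxo].
  by move: Hxb; rewrite -(cocl_eq Hc Ho HbO Hob) Hxo.
have cnt2 : forall o o', o \in Ox -> o' \in Ox -> o' != o ->
    #|[set b in D | col b o && col b o']| = t.
  move=> o o' Ho Ho' Hne.
  move: Ho Ho'; rewrite !inE => /andP[HoO Hxo] /andP[Ho'O Hxo'].
  have Hoo' : ~~ col o o' by apply: Hc => //; rewrite eq_sym.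
  have := cardsD1 x (Z o o'); rewrite (cardZ Hoo') inE [col o x]colC [col o' x]colC Hxo Hxo' /= add1n => -[] ->.
  apply: eq_card => b; rewrite !inE [col b o]colC [col b o']colC.
  apply/idP/idP.
    case/andP => /andP[Hxb _] ->; rewrite andbT; apply: contraNneq Hxb => ->; exact: colxx.
  case/andP => Hbx /andP[Hob Ho'b]; rewrite Hob Ho'b !andbT; apply/andP; split.
    apply/negP => /existsP[l /andP[Hxl Hbl]].
    have Hxb' : x != b by rewrite eq_sym.
    have Hol := tri Hxl Hbl Hxb' (etrans (colC o x) Hxo) Hob.
    have Ho'l := tri Hxl Hbl Hxb' (etrans (colC o' x) Hxo') Ho'b.
    by move: Hoo'; rewrite (colI Hol Ho'l).
  apply/negP => HbO; move: Ho'b; rewrite -(cocl_eq Hc HoO HbO Hob) colC.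
  by rewrite (negbTE Hoo').
have S1 : \sum_(y in D) m y = t.+1 * (s * t).
  rewrite /m -(dcount Ox D (fun o y => col y o)) -HOx -sum_nat_const.
  apply: eq_bigr => o Ho; rewrite -(cnt1 o Ho); apply: eq_card => b; by rewrite !inE andbb.
have S2 : \sum_(y in D) m y * m y = t.+1 * (s * t + t * t).
  have E : forall y, m y * m y = \sum_(o in Ox) \sum_(o' in Ox) ((col y o && col y o') : nat).
    move=> z; rewrite /m (@card_sumb _ Ox (fun o => col z o)) big_distrl /=; apply: eq_bigr => o _.
    rewrite big_distrr /=; apply: eq_bigr => o' _; by rewrite mulnb.
  under eq_bigr => z _ do rewrite E.
  rewrite exchange_big /= -HOx -sum_nat_const; apply: eq_bigr => o Ho.
  rewrite exchange_big /=.
  under eq_bigr => o' _ do rewrite -card_sumb.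
  rewrite (big_setD1 o Ho) /= cnt1 //.
  rewrite (eq_bigr (fun _ => t)); last first.
    by move=> o'; rewrite !inE => /andP[Hne Ho']; apply: cnt2 => //; rewrite inE.
  rewrite sum_nat_const; have := cardsD1 o Ox; rewrite Ho HOx add1n => -[] <-. done.
have HD : #|D| + #|[set o in O | ~~ col x o]| = s * s * t.
  rewrite -(cardDelta x tpos) -(card_split (Delta x) (fun y => y \notin O)).
  congr (_ + _); apply: eq_card => z; rewrite !inE negbK andbC //.
have He : #|Ox| + #|[set o in O | ~~ col x o]| = #|O| := card_split O (col x).
have Hm : forall y, y \in D -> 2 * s * m y = m y * m y + s * s.
  apply: (@sum_le_eq _ D (fun y => 2 * s * m y) (fun y => m y * m y + s * s)).
    move=> z _; have := (nat_Cauchy (m z) s).1.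
    by rewrite -!mulnn (mulnC (m z) s) mulnA.
  rewrite big_split /= sum_nat_const -big_distrr /= S1 S2.
  move: HD He; rewrite HO HOx.
  set d := #|D|; set e := #|[set o in O | ~~ col x o]|.
  rewrite Hs Ht => HD He.
  have Ee : e = p.+1 * p * p by lia.
  have Ed : d = p.+1 * p * (p * p + p + 1) by lia.
  rewrite Ed; lia.
have := Hm y; rewrite !inE Hxy Hy => /(_ isT) H.
have := (nat_Cauchy (m y) s).2.
rewrite -!mulnn (mulnC (m y) s) mulnA H eqxx.
by move/esym/eqP.
Qed.


Lemma inter O O' x : cocl O -> #|O| = (s * t).+1 -> cocl O' -> #|O'| = (s * t).+1 ->
  x \in O' -> x \notin O -> #|O :&: O'| = p * p.
Proof.
move=> Hc HO Hc' HO' HxO' HxO.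
set Ox := [set o in O | col x o].
have HOx : #|Ox| = t.+1 by apply: cA => //; exact: tpos.
set B := O' :\ x.
have H := dcount Ox B (fun o y => col o y).
have L1 : \sum_(o in Ox) #|[set b in B | col o b]| = t.+1 * t.
  rewrite -HOx -sum_nat_const; apply: eq_bigr => o; rewrite inE => /andP[Ho Hxo].
  have Hox : o != x by apply: contraNneq HxO => <-.
  have HoO' : o \notin O'.
    by apply/negP => HoO'; move: (Hc' _ _ HoO' HxO' Hox); rewrite colC Hxo.
  have := cardsD1 x [set y in O' | col o y]; rewrite (cA Hc' HO' tpos HoO') inE HxO' colC Hxo add1n /= => -[] ->.
  by apply: eq_card => b; rewrite !inE andbA.
have L2 : \sum_(b in B) #|[set a in Ox | col a b]| = s * #|[set b in B | b \notin O]|.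
  rewrite card_sumb big_distrr /=; apply: eq_bigr => y; rewrite !inE => /andP[Hyx HyO'].
  have Hxy : ~~ col x y by apply: Hc' => //; rewrite eq_sym.
  case HyO: (y \in O) => /=.
    rewrite muln0; apply/eqP; rewrite cards_eq0; apply/eqP/setP => a; rewrite !inE.
    apply/negP => /andP[/andP[Ha Hxa] Hay].
    by move: Hxy; rewrite -(cocl_eq Hc Ha HyO Hay) Hxa.
  rewrite muln1 -(mB Hc HO HxO (negbT HyO) Hxy); apply: eq_card => a; rewrite !inE [col a y]colC.
  by rewrite andbA.
rewrite L1 L2 in H.
have Hsp := card_split B (fun b => b \notin O).
have HB : #|B| = s * t.
  by have := cardsD1 x O'; rewrite HxO' HO' add1n => -[] <-.
have -> : #|O :&: O'| = #|[set x0 in B | ~~ (x0 \notin O)]|.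
  apply: eq_card => y; rewrite !inE negbK.
  case HyO: (y \in O); rewrite ?andbF ?andbT //=.
  by case: eqP => // E; rewrite -E HyO in HxO.
move: H Hsp; rewrite HB Hs Ht.
set j := #|[set b in B | b \notin O]|; set k := #|[set x0 in B | ~~ (x0 \notin O)]|.
move=> H Hsp.
have Hj : j = (p.+1 * p).+1 * p.
  apply/eqP; rewrite -(eqn_pmul2l (ltn0Sn p)) -H; apply/eqP; lia.
lia.
Qed.


Lemma main_sec (Htr : point_transitive inc) (O : {set P}) :
  cocl O -> #|O| = (s * t).+1 -> 1 < p -> False.
Proof.
move=> HcO HO Hp1.
pose ovb (X : {set P}) := [forall a in X, forall b in X, (a != b) ==> ~~ col a b]
   && (#|X| == (s * t).+1).
have ovbP : forall X, ovb X -> cocl X /\ #|X| = (s * t).+1.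
  move=> X /andP[/forallP H1 /eqP H2]; split=> // a b Ha Hb Hab.
  by have := H1 a; rewrite Ha /= => /forallP /(_ b); rewrite Hb Hab.
have ovbO : ovb O.
  apply/andP; split; last by rewrite HO.
  apply/forallP => a; apply/implyP => Ha; apply/forallP => b; apply/implyP => Hb.
  by apply/implyP => Hab; exact: HcO.
set F := [set X : {set P} | ovb X].
pose r x := #|[set X in F | x \in X]|.
have rle : forall x y, r x <= r y.
  move=> x y; have [f [g [Haut Hfx]]] := Htr x y.
  have colf : forall a b, col (f a) (f b) = col a b.
    move=> a b; apply/existsP/existsP => [[l /andP[Ha Hb]] | [l /andP[Ha Hb]]].
      by exists (g^-1 l)%g; rewrite -[inc a _]Haut -[inc b _]Haut permKV Ha Hb.
    by exists (g l); rewrite !Haut Ha Hb.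
  rewrite /r -Hfx -(card_imset _ (imset_inj (@perm_inj _ f))).
  apply: subset_leq_card; apply/subsetP => Y /imsetP [X HX ->].
  move: HX; rewrite !inE => /andP[HX Hx]; rewrite imset_f // andbT.
  have [HcX HXc] := ovbP X HX.
  apply/andP; split; last by rewrite card_imset ?HXc //; exact: perm_inj.
  apply/forallP => a'; apply/implyP => /imsetP[a Ha ->].
  apply/forallP => b'; apply/implyP => /imsetP[b Hb ->].
  apply/implyP => Hab; rewrite colf; apply: HcX => //.
  by apply: contraNneq Hab => ->.
have rc : forall x y, r x = r y by move=> x y; apply/eqP; rewrite eqn_leq !rle.
have [x0 Hx0] : exists x0, x0 \in O by apply/card_gt0P; rewrite HO.
set r0 := r x0.
set n := #|F|.
have OF : O \in F by rewrite inE.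
have Hn : n = s.+1 * r0.
  have := @dcount_const _ _ F [set: P] (fun X x => x \in X) (s * t).+1 r0.
  rewrite (cardP x0 tpos) => H.
  have : n * (s * t).+1 = s.+1 * r0 * (s * t).+1.
    rewrite H; first by rewrite mulnAC.
    - move=> X HX; rewrite -(ovbP X _).2; last by rewrite inE in HX.
      by apply: eq_card => z; rewrite !inE.
    - by move=> x _; exact: (rc x x0).
  by move/eqP; rewrite eqn_pmul2r // => /eqP.
have Hii : (s * t).+1 * r0 = (s * t).+1 + (n - 1) * (p * p).
  have H := dcount F O (fun X x => x \in X).
  rewrite [X in _ = X](eq_bigr (fun _ => r0)) in H; last by move=> x _; exact: (rc x x0).
  rewrite sum_nat_const HO in H; rewrite -H (big_setD1 O OF) /=.
  have -> : #|[set b in O | b \in O]| = (s * t).+1.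
    by rewrite -HO; apply: eq_card => z; rewrite !inE andbb.
  congr (_ + _).
  rewrite (eq_bigr (fun _ => p * p)); last first.
    move=> X; rewrite !inE => /andP[HXO HX].
    have [HcX HXc] := ovbP X HX.
    have [x Hx] : exists x, x \in X :\: O.
      apply/set0Pn; rewrite setD_eq0; apply: contra HXO => Hsub.
      by rewrite eqEcard Hsub HXc HO leqnn.
    move: Hx; rewrite inE => /andP[HxO HxX].
    rewrite -(inter HcO HO HcX HXc HxX HxO); apply: eq_card => z; by rewrite !inE.
  rewrite sum_nat_const; congr (_ * _).
  by have := cardsD1 O F; rewrite OF add1n /n => ->; rewrite subn1.
have [a [b [Ha Hb Hab]]] : exists a b, [/\ a \in O, b \in O & a != b].
  apply/card_gt1P; rewrite HO ltnS Hs Ht muln_gt0 /=; rewrite -Ht; exact: tpos.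
have Hab' : ~~ col a b by apply: HcO.
have HZ := cardZ Hab'.
set A := #|[set X in F | (a \notin X) && (b \notin X)]|.
have Hiii : t.+1 * r0 = s * A.
  have H := dcount F (Z a b) (fun X z => z \in X).
  rewrite [X in _ = X](eq_bigr (fun _ => r0)) in H; last by move=> x _; exact: (rc x x0).
  rewrite sum_nat_const HZ in H; rewrite -H /A card_sumb big_distrr /=.
  apply: eq_bigr => X; rewrite inE => HX.
  have [HcX HXc] := ovbP X HX.
  case HaX: (a \in X) => /=.
    rewrite muln0; apply/eqP; rewrite cards_eq0; apply/eqP/setP => z; rewrite !inE.
    apply/negP => /andP[/andP[Haz Hbz] HzX].
    by move: Hab'; rewrite (cocl_eq HcX HaX HzX Haz) colC Hbz.
  case HbX: (b \in X) => /=.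
    rewrite muln0; apply/eqP; rewrite cards_eq0; apply/eqP/setP => z; rewrite !inE.
    apply/negP => /andP[/andP[Haz Hbz] HzX].
    by move: Hab'; rewrite (cocl_eq HcX HbX HzX Hbz) Haz.
  rewrite muln1 -(mB HcX HXc (negbT HaX) (negbT HbX) Hab').
  by apply: eq_card => z; rewrite !inE andbC.
set F1 := [set X in F | a \notin X].
set F2 := [set X in F | b \in X].
have E1 := card_split F (fun X => a \in X).
have E2 := card_split F1 (fun X => b \in X).
have E3 := card_split F2 (fun X => a \in X).
have Ea : #|[set x in F | a \in x]| = r0 by exact: (rc a x0).
have Eb : #|F2| = r0 by exact: (rc b x0).
have E4 : #|[set x in F | ~~ (a \in x)]| = #|F1| by [].
have E5 : #|[set x in F1 | b \in x]| = #|[set x in F2 | ~~ (a \in x)]|.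
  by apply: eq_card => X; rewrite !inE; case: (ovb X); case: (a \in X); case: (b \in X).
have E6 : #|[set x in F1 | ~~ (b \in x)]| = A.
  by apply: eq_card => X; rewrite !inE; case: (ovb X); case: (a \in X); case: (b \in X).
move: E1 E2 E3; rewrite Ea E4 E5 E6 Eb.
set u := #|[set x in F2 | ~~ (a \in x)]|; set lam := #|[set x in F2 | a \in x]|.
move=> E1 E2 E3.
have n1 : 0 < n by apply/card_gt0P; exists O.
move: Hii Hiii; rewrite Hn Hs Ht => Hii Hiii.
rewrite Hn in E1 n1.
have Hr : r0 * p.+1 = p.+1 * (p * p + 1).
  have Hr1 : 0 < r0 by move: n1; rewrite muln_gt0 => /andP[].
  have Hbb : p * p <= p.+2 * r0 * (p * p) by apply: leq_pmull; rewrite muln_gt0.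
  move: Hii; rewrite mulnBl mul1n; lia.
have Hr' : r0 = p * p + 1.
  by apply/eqP; rewrite -(eqn_pmul2l (ltn0Sn p)) mulnC Hr.
rewrite Hr' in Hiii E1 E3.
have Hl : p.+1 * lam = p * p + 1.
  have HA : A = p * (p * p + 1) + lam by lia.
  rewrite HA in Hiii; lia.
case: (ltnP lam p) => Hlp.
  have : p.+1 * lam <= p.+1 * p.-1 by rewrite leq_mul2l -ltnS prednK // ltnW.
  rewrite Hl; case: p Hp Hp1 {Hl Hlp Hr Hr' Hii Hiii E1 E2 E3 n1} => // p' _ _ /=.
  rewrite mulSn; lia.
have : p.+1 * p <= p.+1 * lam by rewrite leq_mul2l Hlp orbT.
rewrite Hl; lia.
Qed.

End GQ.

Theorem lemma5p3 (q : nat) (P L : finType) (inc : P -> L -> bool) :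
  2 < q ->
  is_GQ inc q (q ^ 2 - q) ->
  point_transitive inc ->
  ~ (exists O : {set P}, is_ovoid inc q (q ^ 2 - q) O).
Proof.
move=> Hq [Hpt Hln Hax] Htr [O [HcoO HOc]]; rewrite addn1 in HOc.
set p := q.-1.
have Hs : q = p.+1 by rewrite /p; lia.
have Ht : q ^ 2 - q = p.+1 * p.
  by rewrite Hs expnS expn1 mulnSr addnK.
have Hp : 0 < p by rewrite /p; lia.
have Hp1 : 1 < p by rewrite /p; lia.
have coO : cocl inc O.
  move=> a b Ha Hb Hab; have := HcoO a b Ha Hb; by rewrite /collinear Hab.
have Hoff : forall l : L, exists x : P, ~~ inc x l.
  move=> l.
  have : 1 < #|O| by rewrite HOc ltnS Ht Hs !muln_gt0 Hp.
  case/card_gt1P => a [b [Ha Hb Hab]].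
  case Hal: (inc a l); last by exists a; rewrite Hal.
  case Hbl: (inc b l); last by exists b; rewrite Hbl.
  by move: (coO a b Ha Hb Hab); rewrite (colI Hal Hbl).
exact: (main_sec Hpt Hln Hax Hoff Hs Ht Hp Htr coO HOc Hp1).
Qed.
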